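(* Let $v$ and $v'$ be distinct false twin vertices of a graph $G$. Then $\tilde\gamma_{gr}^{\times 2}(G-v')\le\tilde\gamma_{gr}^{\times 2}(G)\le\tilde\gamma_{gr}^{\times 2}(G-v')+1$. Moreover, if $S$ is an MDNS of $G$ and $\tilde\gamma_{gr}^{\times 2}(G)=\tilde\gamma_{gr}^{\times 2}(G-v')+1$, then at least one of $v,v'$ belongs to $S$.
   Context: Graphs are finite, simple, undirected; $N(v)$ open and $N[v]$ closed neighborhood; $v,v'$ are false twins if $N(v)=N(v')$. A sequence $S=(v_1,\dots,v_k)$ of distinct vertices is a double neighborhood sequence (DNS) if for each $i$ some $u\in N[v_i]$ satisfies $|\{j<i: u\in N[v_j]\}|\le 1$. An MDNS is a DNS of maximum length; $\tilde\gamma_{gr}^{\times 2}(G)$ is that length. *)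

(* Defs.v *)
(* Induced subgraphs are handled by a vertex set V : {set T};
   G itself is V = [set: T], and G - v' is V = [set: T] :\ v'. *)
From mathcomp Require Import all_boot.
Set Implicit Arguments. Unset Strict Implicit. Unset Printing Implicit Defensive.

Section Graph.
Variables (T : finType) (e : rel T).

Definition simple_graph := symmetric e /\ irreflexive e.

Definition Nopen (v : T) : {set T} := [set w | e v w].

Definition Nclosed (V : {set T}) (w : T) : {set T} :=
  [set u in V | (u == w) || e w u].

Definition dns_step (V : {set T}) (prev : seq T) (x : T) : bool :=
  [exists u in Nclosed V x, count (fun w => u \in Nclosed V w) prev <= 1].

Fixpoint dns_aux (V : {set T}) (prev rest : seq T) : bool :=
  if rest is x :: r then dns_step V prev x && dns_aux V (rcons prev x) r
  else true.

Definition is_dns (V : {set T}) (S : seq T) : bool :=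
  [&& uniq S, all (fun x => x \in V) S & dns_aux V [::] S].

Definition has_dns_of_size (V : {set T}) (n : nat) : bool :=
  [exists t : n.-tuple T, is_dns V t].

(* maximum length of a DNS (any DNS has length <= #|T| by uniqueness) *)
Definition gamma_gr2 (V : {set T}) : nat :=
  \max_(n < #|T|.+1 | has_dns_of_size V n) n.

Definition is_mdns (V : {set T}) (S : seq T) : Prop :=
  is_dns V S /\ forall S', is_dns V S' -> size S' <= size S.

End Graph.

(* Main.v *)
Require Import Defs.
From mathcomp Require Import all_boot zify.
Set Implicit Arguments. Unset Strict Implicit. Unset Printing Implicit Defensive.

Section P.
Variables (T : finType) (e : rel T).

Lemma dns_le_gamma V S : is_dns e V S -> size S <= gamma_gr2 e V.
Proof.
move=> HS.
have Hsz : size S < #|T|.+1.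
  case/and3P: HS => Hu _ _; rewrite ltnS -(card_uniqP Hu); exact: max_card.
have Hh : has_dns_of_size e V (size S).
  by apply/existsP; exists (in_tuple S).
exact: (@leq_bigmax_cond _ (fun i : 'I_#|T|.+1 => has_dns_of_size e V i) (fun i => nat_of_ord i) (Ordinal Hsz) Hh).
Qed.

Lemma gamma_attained V : exists S, is_dns e V S /\ size S = gamma_gr2 e V.
Proof.
rewrite /gamma_gr2.
have H0 : 0 < #|(fun i : 'I_#|T|.+1 => has_dns_of_size e V i)|.
  apply/card_gt0P; exists ord0; rewrite /in_mem /=.
  by apply/existsP; exists [tuple].
have [i0 Hi0 ->] := eq_bigmax_cond (fun i : 'I_#|T|.+1 => nat_of_ord i) H0.
move: Hi0; rewrite /in_mem /= => /existsP [t Ht].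
by exists t; rewrite size_tuple.
Qed.

End P.

Section P.
Variables (T : finType) (e : rel T) (Hg : simple_graph e) (v v' : T)
  (Hvv' : v != v') (Htwin : Nopen e v = Nopen e v').

Let V' := [set: T] :\ v'.

Lemma twin y : e v y = e v' y.
Proof. by have := congr1 (fun A : {set T} => y \in A) Htwin; rewrite /Nopen !inE. Qed.

Lemma twin' y : e y v = e y v'.
Proof. by case: Hg => Hs _; rewrite Hs (Hs y) twin. Qed.

Lemma sub_aux rest prev : dns_aux e V' prev rest -> dns_aux e [set: T] prev rest.
Proof.
elim: rest prev => [//|x r IH] prev /= /andP [Hs Hr]; rewrite IH // andbT.
move: Hs => /existsP [u /andP [Hu Hc]]; apply/existsP; exists u.
move: Hu; rewrite /Nclosed !inE => /andP [/andP [Huv' _] Hux]; rewrite Hux /=.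
rewrite (leq_trans _ Hc) // leq_eqVlt; apply/orP; left; apply/eqP.
by apply: eq_count => w; rewrite !inE Huv'.
Qed.

Lemma sub_dns S : is_dns e V' S -> is_dns e [set: T] S.
Proof.
case/and3P => Hu _ Ha; apply/and3P; split => //; first by apply/allP => x; rewrite inE.
exact: sub_aux.
Qed.

Lemma count_eq4 (a b c d : pred T) s : (forall w, a w + c w = b w + d w) ->
  count a s + count c s = count b s + count d s.
Proof. move=> H; elim: s => //= w s IH; have := H w; lia. Qed.

Lemma main_aux rest prev : uniq (prev ++ rest) ->
  (forall k, v \in prev ++ take k rest -> v' \in prev ++ take k rest) ->
  dns_aux e [set: T] prev rest ->
  dns_aux e V' (filter (predC1 v') prev) (filter (predC1 v') rest).
Proof.
elim: rest prev => [//|x r IH] prev Hu Hk /= /andP [Hs Hr].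
have IH' : dns_aux e V' (filter (predC1 v') (rcons prev x)) (filter (predC1 v') r).
  apply: IH => //; first by rewrite cat_rcons.
  by move=> k; rewrite cat_rcons; apply: (Hk k.+1).
case: eqP => [Exv'|/eqP Hxv'] /=.
  by move: IH'; rewrite -cats1 filter_cat /= Exv' eqxx cats0.
move: IH'; rewrite -cats1 filter_cat /= Hxv' cats1 => -> ; rewrite andbT.
have Hp : v \in prev -> v' \in prev by move=> H; have := Hk 0; rewrite take0 cats0; apply.
have Hup : uniq prev by move: Hu; rewrite cat_uniq => /andP [].
move: Hs => /existsP [u /andP [Hux Hc]].
case: (eqVneq u v') => [Euv'|Huv'].
-
  subst u. apply/existsP; exists v.
  have Hex : e x v'.
    by move: Hux; rewrite /Nclosed !inE eq_sym (negbTE Hxv').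
  rewrite /Nclosed !inE Hvv' /= twin' Hex orbT /=.
  rewrite count_filter.
  set a := predI _ _.
  set b := (fun w => v' \in Nclosed e [set: T] w) in Hc.
  have E := @count_eq4 a b (pred1 v') (pred1 v) prev.
  have E' : count a prev + count (pred1 v') prev = count b prev + count (pred1 v) prev.
    apply: E => w; rewrite /a /b /Nclosed /V' /= !inE /=.
    case: Hg => Hs Hi.
    have Hv'v : (v' == v) = false by rewrite eq_sym (negbTE Hvv').
    have [->|Hwv] := eqVneq w v.
      by rewrite ?(negbTE Hvv') ?Hv'v ?(twin v') ?Hi ?eqxx.
    have [->|Hwv'] := eqVneq w v'.
      by rewrite ?Hv'v ?Hi ?(negbTE Hvv') ?eqxx andbF.
    by rewrite (negbTE Hvv') twin' /=; case: (e w v').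
  have C1 := count_uniq_mem v Hup.
  have C2 := count_uniq_mem v' Hup.
  move: E'; rewrite -/(count_mem v prev) -/(count_mem v' prev) C1 C2.
  move: Hc; rewrite -/b.
  case: (boolP (v \in prev)) => Hv.
    by rewrite (Hp Hv) /=; lia.
  by move=> /=; lia.
- apply/existsP; exists u.
  move: Hux; rewrite /Nclosed !inE Huv' /= => -> /=.
  rewrite count_filter (leq_trans _ Hc) //.
  rewrite (@eq_count _ _ (predI (fun w => u \in Nclosed e [set: T] w) (predC1 v'))).
    by apply: sub_count => w /= /andP [].
  by move=> w; rewrite /Nclosed /= !inE Huv'.
Qed.


Definition sig (x : T) := if x == v then v' else if x == v' then v else x.

Lemma sigK : involutive sig.
Proof.
move=> x; rewrite /sig.
have [->|Hxv] := eqVneq x v; first by rewrite ?eqxx ?(eq_sym v' v) ?(negbTE Hvv').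
have [->|Hxv'] := eqVneq x v'; first by rewrite ?eqxx.
by rewrite (negbTE Hxv) (negbTE Hxv').
Qed.

Lemma sig_inj : injective sig. Proof. exact: inv_inj sigK. Qed.

Lemma sig_edge a b : e (sig a) (sig b) = e a b.
Proof.
case: Hg => Hs Hi.
have E1 y : e y (sig y) = false.
  rewrite /sig; have [->|Hyv] := eqVneq y v; first by rewrite ?eqxx (twin v') Hi.
  have [->|Hyv'] := eqVneq y v'; first by rewrite ?(eq_sym v' v) ?(negbTE Hvv') ?eqxx -(twin v) Hi.
  exact: Hi.
have E2 y : e (sig y) y = false by rewrite Hs E1.
have Ee y z : y != v -> y != v' -> e z (sig y) = e z y.
  by move=> H1 H2; rewrite /sig (negbTE H1) (negbTE H2).
have [Ha|Ha] := boolP ((a == v) || (a == v')).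
  have [Hb|Hb] := boolP ((b == v) || (b == v')).
    case/orP: Ha => /eqP ->; case/orP: Hb => /eqP ->;
      rewrite /sig ?eqxx ?(eq_sym v' v) ?(negbTE Hvv') ?Hi //; by rewrite Hs.
  move: Hb; rewrite negb_or => /andP [Hb1 Hb2].
  rewrite Ee // Hs [e a b]Hs.
  by case/orP: Ha => /eqP ->; rewrite /sig ?eqxx ?(eq_sym v' v) ?(negbTE Hvv') ?twin' .
move: Ha; rewrite negb_or => /andP [Ha1 Ha2].
rewrite Hs Ee // Hs.
have [Hb|Hb] := boolP ((b == v) || (b == v')).
  by case/orP: Hb => /eqP ->; rewrite /sig ?eqxx ?(eq_sym v' v) ?(negbTE Hvv') twin'.
by move: Hb; rewrite negb_or => /andP [Hb1 Hb2]; rewrite /sig (negbTE Hb1) (negbTE Hb2).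
Qed.

Lemma sig_N a b : (sig a \in Nclosed e [set: T] (sig b)) = (a \in Nclosed e [set: T] b).
Proof. by rewrite /Nclosed !inE (inj_eq sig_inj) sig_edge. Qed.

Lemma sig_aux rest prev : dns_aux e [set: T] prev rest ->
  dns_aux e [set: T] (map sig prev) (map sig rest).
Proof.
elim: rest prev => [//|x r IH] prev /= /andP [Hs Hr].
rewrite -map_rcons IH // andbT.
move: Hs => /existsP [u /andP [Hu Hc]]; apply/existsP; exists (sig u).
rewrite sig_N Hu /= count_map.
by rewrite (eq_count (a2 := fun w => u \in Nclosed e [set: T] w)) // => w /=; rewrite sig_N.
Qed.

Lemma sig_dns S : is_dns e [set: T] S -> is_dns e [set: T] (map sig S).
Proof.
case/and3P => Hu _ Ha; apply/and3P; split.
- by rewrite map_inj_uniq // ; exact: sig_inj.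
- by apply/allP => x; rewrite inE.
- exact: sig_aux Ha.
Qed.

Lemma filter_dns S : is_dns e [set: T] S ->
  (forall k, v \in take k S -> v' \in take k S) ->
  is_dns e V' (filter (predC1 v') S).
Proof.
case/and3P => Hu _ Ha Hk; apply/and3P; split.
- exact: filter_uniq.
- apply/allP => x; rewrite mem_filter /V' !inE. by case/andP => ->.
- exact: (main_aux (prev := [::])).
Qed.

Lemma cond_index S : index v' S <= index v S ->
  forall k, v \in take k S -> v' \in take k S.
Proof.
move=> Hi k Hv.
have HvS := mem_take Hv.
have Hv'S : v' \in S by rewrite -index_mem (leq_ltn_trans Hi) // index_mem.
by rewrite in_take // (leq_ltn_trans Hi) // -(in_take _ HvS).
Qed.

Lemma prop7_aux :
  gamma_gr2 e ([set: T] :\ v') <= gamma_gr2 e [set: T]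
                               <= gamma_gr2 e ([set: T] :\ v') + 1
  /\ (forall S : seq T, is_mdns e [set: T] S ->
        gamma_gr2 e [set: T] = gamma_gr2 e ([set: T] :\ v') + 1 ->
        (v \in S) || (v' \in S)).
Proof.
split; first (apply/andP; split).
- have [S [HS <-]] := gamma_attained e V'.
  exact/dns_le_gamma/sub_dns.
- have [S [HS <-]] := gamma_attained e [set: T].
  have [S2 [HS2 Hsz Hc]] : exists S2, [/\ is_dns e [set: T] S2, size S2 = size S &
      forall k, v \in take k S2 -> v' \in take k S2].
    have [Hle|Hlt] := leqP (index v' S) (index v S).
      by exists S; split => //; exact: cond_index.
    exists (map sig S); split; [exact: sig_dns | by rewrite size_map |].
    apply: cond_index.
    have Hs1 : sig v = v' by rewrite /sig eqxx.
    have Hs2 : sig v' = v by rewrite /sig eq_sym (negbTE Hvv') eqxx.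
    have E1 : index v' (map sig S) = index v S.
      by rewrite -Hs1 index_map //; exact: sig_inj.
    have E2 : index v (map sig S) = index v' S.
      by rewrite -Hs2 index_map //; exact: sig_inj.
    by rewrite E1 E2 ltnW.
  have H := dns_le_gamma (filter_dns HS2 Hc).
  have Hu : uniq S2 by case/and3P: HS2.
  rewrite size_filter /V' in H.
  have Hcnt : count (predC1 v') S2 + count_mem v' S2 = size S2.
    by rewrite addnC; exact: count_predC.
  rewrite count_uniq_mem // Hsz in Hcnt.
  move: Hcnt H; case: (v' \in S2) => /=; lia.
- move=> S [HS Hmax] Heq.
  apply/negPn/negP; rewrite negb_or => /andP [Hv Hv'].
  have [S0 [HS0 Hsz0]] := gamma_attained e [set: T].
  have H1 := Hmax _ HS0.
  have Hf := filter_dns HS (fun k H => False_ind _ (negP Hv (mem_take H))).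
  have Ef : filter (predC1 v') S = S.
    by apply/all_filterP/allP => x Hx /=; apply/eqP => Ex; move: Hv'; rewrite -Ex Hx.
  rewrite Ef in Hf.
  have := dns_le_gamma Hf; rewrite /V'.
  rewrite Hsz0 Heq in H1 => H2.
  by have := leq_trans H1 H2; rewrite addn1 ltnn.
Qed.

End P.

Theorem proposition7 (T : finType) (e : rel T) (Hg : simple_graph e)
    (v v' : T) (Hvv' : v != v') (Htwin : Nopen e v = Nopen e v') :
  gamma_gr2 e ([set: T] :\ v') <= gamma_gr2 e [set: T]
                               <= gamma_gr2 e ([set: T] :\ v') + 1
  /\ (forall S : seq T, is_mdns e [set: T] S ->
        gamma_gr2 e [set: T] = gamma_gr2 e ([set: T] :\ v') + 1 ->
        (v \in S) || (v' \in S)).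
Proof. exact: prop7_aux. Qed.
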